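(* Suppose $1 \le p, p_1, p_2 < \infty$ and $0 \le \alpha_1, \alpha_2 \le 1$ satisfy $\alpha_1 + \alpha_2 = 1$ and $\frac1p = \frac{\alpha_1}{p_1} + \frac{\alpha_2}{p_2}$. Suppose also $A = A_1 + A_2$ (non-negative integers). Let $U \subset B_R$ be a finite union of the balls $B_{K^2}$. Then $$ \| E f \|_{\mathrm{BL}^p_{k,A}(U)} \le \| E f \|^{\alpha_1}_{\mathrm{BL}^{p_1}_{k,A_1}(U)} \| E f \|^{\alpha_2}_{\mathrm{BL}^{p_2}_{k,A_2}(U)}.$$
   Context: $E f(x) := \int_{B^{n-1}} e^{ i ( x' \cdot \omega + x_n | \omega |^2) } f(\omega)\, d \omega$. $G(\omega) = (-2\omega,1)/|(-2\omega,1)|$. $B^{n-1}$ is a disjoint union of approximate balls $\tau$ of radius $K^{-1}$, $f_\tau = f 1_\tau$, $G(\tau)$ the image of $\tau$ under $G$, $\mathrm{Angle}(G(\tau),V)$ the smallest angle between nonzero vectors of $V$ and of $G(\tau)$. $B_R$ is decomposed into balls $B_{K^2}$ of radius $K^2$. For such a ball and exponent $p$, $\mu^{(p)}_{Ef}(B_{K^2}) := \min_{V_1,\dots,V_A} \max_{\tau: \mathrm{Angle}(G(\tau),V_a) > K^{-1}\,\forall a} \int_{B_{K^2}} |Ef_\tau|^p$, minimum over $(k-1)$-dimensional subspaces $V_a$ of $\mathbb{R}^n$ (when $A=0$, the maximum over all $\tau$). For $U$ a finite union of balls $B_{K^2}$, $\|Ef\|^p_{\mathrm{BL}^p_{k,A}(U)}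 := \sum_{B_{K^2}\subset U}\mu^{(p)}_{Ef}(B_{K^2})$. *)

(* Defs.v *)
From HB Require Import structures.
From mathcomp Require Import all_boot all_order all_algebra.
From mathcomp Require Import all_classical all_reals all_analysis.
Unset Printing Implicit Defensive.
Import Order.TTheory GRing.Theory Num.Theory.
Local Open Scope classical_set_scope.
Local Open Scope ring_scope.

Section Defs.
Variable R : realType.

(** Lebesgue measure on R^n, with R^n represented as n.-tuple R
    (product sigma-algebra), built as iterated product measure:
    lebn 0 = Dirac mass at the empty tuple,
    lebn (n+1) = image of (Lebesgue on R) x (lebn n) under (t, v) |-> t :: v. *)
Fixpoint lebn (n : nat) : set (n.-tuple R) -> \bar R :=
  match n return set (n.-tuple R) -> \bar R with
  | 0 => @dirac _ (0.-tuple R) [tuple] R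
  | n'.+1 => pushforward (product_measure1 lebesgue_measure (lebn n'))
               (fun p : R * n'.-tuple R => [tuple of p.1 :: p.2])
  end.

Definition sqn (n : nat) (x : n.-tuple R) : R := \sum_(i < n) tnth x i ^+ 2.
Definition eucl (n : nat) (x : n.-tuple R) : R := Num.sqrt (sqn n x).

Definition eball (n : nat) (c : n.-tuple R) (r : R) : set (n.-tuple R) :=
  [set x | \sum_(i < n) (tnth x i - tnth c i) ^+ 2 < r ^+ 2].

(** the unit ball B^{n-1} of R^m, m = n-1 *)
Definition unit_ball (m : nat) : set (m.-tuple R) := [set w | sqn m w < 1].

Definition phase (m : nat) (x : m.+1.-tuple R) (w : m.-tuple R) : R :=
  \sum_(i < m) nth 0 x i * tnth w i + nth 0 x m * sqn m w.

(** A complex function f on R^m is given by its real and imaginary parts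
    (fr, fi).  E f(x) = \int_{B^{m}} e^{i phase(x,w)} f(w) dw; we give its
    real and imaginary parts. *)
Definition ExtRe (m : nat) (fr fi : m.-tuple R -> R) (x : m.+1.-tuple R) : R :=
  fine (\int[lebn m]_(w in unit_ball m)
          ((cos (phase m x w) * fr w - sin (phase m x w) * fi w)%:E))%E.
Definition ExtIm (m : nat) (fr fi : m.-tuple R -> R) (x : m.+1.-tuple R) : R :=
  fine (\int[lebn m]_(w in unit_ball m)
          ((sin (phase m x w) * fr w + cos (phase m x w) * fi w)%:E))%E.

Definition Ext_abs (m : nat) (fr fi : m.-tuple R -> R) (x : m.+1.-tuple R) : R :=
  Num.sqrt (ExtRe m fr fi x ^+ 2 + ExtIm m fr fi x ^+ 2).

Definition restr (m : nat) (tau : set (m.-tuple R)) (f : m.-tuple R -> R) :=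
  fun w => f w * \1_tau w.

Definition rdot (n : nat) (v w : 'rV[R]_n) : R := \sum_(i < n) v 0 i * w 0 i.
Definition rnorm (n : nat) (v : 'rV[R]_n) : R := Num.sqrt (rdot n v v).

Definition Gmap (m : nat) (w : m.-tuple R) : 'rV[R]_(m.+1) :=
  let v := \row_(i < m.+1) (if (i < m)%N then - 2 * nth 0 w i else 1) in
  (rnorm m.+1 v)^-1 *: v.

(** Angle(S, V) > c, where Angle(S,V) is the smallest (infimal) angle between
    nonzero vectors of V and nonzero vectors of S (+oo if there are none). *)
Definition angle_gt (n : nat) (S : set 'rV[R]_n) (V : {vspace 'rV[R]_n}) (c : R)
  : Prop :=
  exists e : R, c < e /\
    forall v w, v \in V -> v != 0 -> S w -> w != 0 ->
      e <= acos (rdot n v w / (rnorm n v * rnorm n w)).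

Definition loc_int (m : nat) (fr fi : m.-tuple R -> R) (tau : set (m.-tuple R))
  (B : set (m.+1.-tuple R)) (p : R) : R :=
  fine (\int[lebn m.+1]_(x in B)
          ((Ext_abs m (restr m tau fr) (restr m tau fi) x) `^ p)%:E)%E.

(** mu^{(p)}_{Ef}(B) : min over (k-1)-dimensional V_1..V_A of the max over
    the tau with Angle(G(tau), V_a) > K^{-1} for all a (max over the empty
    family being 0).  The set of candidate values is finite, so min = inf. *)
Definition mu_p (m : nat) (I : finType) (tau : I -> set (m.-tuple R)) (K : R)
  (k A : nat) (fr fi : m.-tuple R -> R) (B : set (m.+1.-tuple R)) (p : R) : R :=
  inf [set y | exists Vs : 'I_A -> {vspace 'rV[R]_(m.+1)},
        (forall a, \dim (Vs a) = k.-1) /\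
        y = \big[Num.max/0]_(i : I |
               `[< forall a, angle_gt m.+1 (Gmap m @` tau i) (Vs a) K^-1 >])
               loc_int m fr fi (tau i) B p].

(** || E f ||_{BL^p_{k,A}(U)}, U the union of the balls B_j, j in S *)
Definition BLnorm (m : nat) (I : finType) (tau : I -> set (m.-tuple R)) (K : R)
  (k A : nat) (fr fi : m.-tuple R -> R) (J : finType) (c : J -> m.+1.-tuple R)
  (S : {set J}) (p : R) : R :=
  (\sum_(j in S) mu_p m I tau K k A fr fi (eball m.+1 (c j) (K ^+ 2)) p) `^ (p^-1).

End Defs.

(* Main.v *)
Require Import Defs.
From HB Require Import structures.
From mathcomp Require Import all_boot all_order all_algebra.
From mathcomp Require Import all_classical all_reals all_analysis.
From mathcomp Require Import measurable_realfun lra ring.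
Import Order.TTheory GRing.Theory Num.Theory.
Local Open Scope classical_set_scope.
Local Open Scope ring_scope.

Section Main.
Variable R : realType.
Definition consf (n : nat) (p : R * n.-tuple R) : n.+1.-tuple R := [tuple of p.1 :: p.2].
Definition uncons (n : nat) (x : n.+1.-tuple R) : R * n.-tuple R := (thead x, [tuple of behead x]).

Lemma measurable_consf n : measurable_fun setT (consf n).
Proof. exact: measurable_cons. Qed.

Lemma measurable_uncons n : measurable_fun setT (uncons n).
Proof.
apply: measurable_fun_pair; last exact: measurable_behead.
exact: measurable_tnth.
Qed.

Lemma unconsK n : cancel (consf n) (uncons n).
Proof. by move=> [t v]; rewrite /uncons /consf /=; congr pair; apply/val_inj. Qed.
Lemma consfK n : cancel (uncons n) (consf n).
Proof. by move=> x; apply/val_inj; rewrite /= [in RHS](tuple_eta x). Qed.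

Lemma preimage_consf_uncons n (S : set (R * n.-tuple R)) :
  consf n @^-1` (uncons n @^-1` S) = S.
Proof.
have -> : consf n @^-1` (uncons n @^-1` S) = (uncons n \o consf n) @^-1` S by [].
rewrite (_ : uncons n \o consf n = id) ?preimage_id//.
by apply/funext => x; exact: unconsK.
Qed.

Definition lebn_step n (mu : {sigma_finite_measure set (n.-tuple R) -> \bar R}) :=
  pushforward (product_measure1 (@lebesgue_measure R) mu) (consf n).

Arguments lebn_step {n}.
Section step.
Variables (n : nat) (mu : {sigma_finite_measure set (n.-tuple R) -> \bar R}).
Local Open Scope ereal_scope.
Let pm := product_measure1 (@lebesgue_measure R) mu.
Let f := consf n.
Let mf : measurable_fun setT f := measurable_consf n.
Let step0 : lebn_step mu set0 = 0.
Proof. by rewrite /lebn_step /pushforward preimage_set0 measure0. Qed.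

Let step_ge0 A : 0 <= lebn_step mu A.
Proof. exact: measure_ge0. Qed.

Let step_sigma_additive : semi_sigma_additive (lebn_step mu).
Proof.
move=> F mF tF mUF; rewrite /lebn_step /pushforward preimage_bigcup.
apply: measure_semi_sigma_additive.
- by move=> k; rewrite -[X in measurable X]setTI; exact: mf.
- apply/trivIsetP => /= i j _ _ ij; rewrite -preimage_setI.
  by move/trivIsetP : tF => /(_ _ _ _ _ ij) ->//; rewrite preimage_set0.
- by rewrite -preimage_bigcup -[X in measurable X]setTI; exact: mf.
Qed.

HB.instance Definition _ := isMeasure.Build _ _ _ (lebn_step mu)
  step0 step_ge0 step_sigma_additive.

Let step_sf : sigma_finite setT (lebn_step mu).
Proof.
have /sigma_finiteP[F [TF ndF Foo]] := sigma_finiteT (@lebesgue_measure R).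
have /sigma_finiteP[G [TG ndG Goo]] := sigma_finiteT mu.
exists (fun k => uncons n @^-1` (F k `*` G k)).
  apply/seteqP; split => // x _.
  have [a _ Fa] : (\bigcup_i F i) (uncons n x).1 by rewrite -TF.
  have [b _ Gb] : (\bigcup_i G i) (uncons n x).2 by rewrite -TG.
  exists (maxn a b) => //; split.
    by move: Fa; exact/subsetPset/ndF/leq_maxl.
  by move: Gb; exact/subsetPset/ndG/leq_maxr.
move=> k; have [mF Ff] := Foo k; have [mG Gf] := Goo k; split.
  rewrite -[X in measurable X]setTI; apply: measurable_uncons => //.
  exact: measurableX.
rewrite /lebn_step /pushforward.
rewrite preimage_consf_uncons.
by rewrite (product_measure1E (@lebesgue_measure R) mu)// lte_mul_pinfty// ge0_fin_numE.
Qed.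

HB.instance Definition _ := Measure_isSigmaFinite.Build _ _ _ (lebn_step mu) step_sf.
End step.

Definition cube (n : nat) (a : R) : set (n.-tuple R) :=
  [set x | forall i, `|tnth x i| <= a].

Lemma cube_measurable n a : measurable (cube n a).
Proof.
have -> : cube n a = \bigcap_(i in [set: 'I_n]) ((@tnth n R ^~ i) @^-1` `[-a, a]).
  apply/seteqP; split => x /=.
    by move=> h i _; rewrite /= in_itv /= -ler_norml.
  by move=> h i; have := h i I; rewrite /= in_itv /= -ler_norml.
apply: fin_bigcap_measurable; first exact: finite_finset.
move=> i _; rewrite -[X in measurable X]setTI; exact: measurable_tnth.
Qed.

Lemma consf_cube n a : consf n @^-1` cube n.+1 a = `[-a, a]%classic `*` cube n a.
Proof.
apply/seteqP; split => -[t v]; rewrite /preimage /cube /=.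
  move=> h; split; first by have := h ord0; rewrite in_itv /= -ler_norml.
  by move=> j; have := h (lift ord0 j); rewrite tnthS.
rewrite in_itv /= -ler_norml => -[ht hv] i.
by case: (unliftP ord0 i) => [j ->|->]; rewrite ?tnthS.
Qed.

Lemma lebn_ex n : exists mu : {sigma_finite_measure set (n.-tuple R) -> \bar R},
  lebn R n = mu /\ forall a, (mu (cube n a) < +oo)%E.
Proof.
elim: n => [|n [mu [Hmu Hc]]].
  exists (@dirac _ (0.-tuple R) [tuple] R); split => // a.
  by rewrite /= /dirac indicE; case: (_ \in _); rewrite ltry.
exists (lebn_step mu); split => /=; first by rewrite Hmu.
move=> a; rewrite /lebn_step /pushforward consf_cube.
rewrite (product_measure1E (@lebesgue_measure R) mu)//; last first.
  exact: cube_measurable.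
apply: lte_mul_pinfty => //.
have := @lebesgue_measure_itv R `[-a, a]%R => /= ->.
by case: ifP => // _; rewrite -EFinN -EFinD.
Qed.

Section P2.
Local Open Scope ereal_scope.
Lemma meas_param d1 d2 (T1 : measurableType d1) (T2 : measurableType d2)
  (m2 : {sigma_finite_measure set T2 -> \bar R}) (D : set T2) (mD : measurable D)
  (h : T1 * T2 -> R) (mh : measurable_fun setT h) :
  measurable_fun setT (fun x => fine (\int[m2]_(y in D) (h (x, y))%:E)).
Proof.
pose H : T1 * T2 -> \bar R := (EFin \o h) \_ (setT `*` D).
have mH : measurable_fun setT H.
  apply/(measurable_restrictT _ _).1; first exact: measurableX.
  apply: (measurable_funS measurableT) => //.
  exact/measurable_EFinP.
have E x : \int[m2]_(y in D) (h (x, y))%:E =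
    fubini_F m2 H^\+ x - fubini_F m2 H^\- x.
  rewrite integralE /fubini_F [X in X - _]integral_mkcond [X in _ - X]integral_mkcond; congr (_ - _);
    apply: eq_integral => y _.
  - rewrite /patch !funeposE /H /patch /=.
    have -> : ((x, y) \in [set: T1] `*` D) = (y \in D).
      by apply/idP/idP => [/set_mem [_ ?]|/set_mem ?]; apply/mem_set.
    by case: ifPn => //; rewrite maxxx.
  - rewrite /patch !funenegE /H /patch /=.
    have -> : ((x, y) \in [set: T1] `*` D) = (y \in D).
      by apply/idP/idP => [/set_mem [_ ?]|/set_mem ?]; apply/mem_set.
    by case: ifPn => //; rewrite oppe0 maxxx.
rewrite (_ : (fun x => _) = fine \o (fubini_F m2 H^\+ \- fubini_F m2 H^\-)).
  apply: measurableT_comp; first exact: fine_measurable.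
  apply: emeasurable_funB.
    apply: measurable_fun_fubini_tonelli_F; first exact: measurable_funepos.
    exact: funepos_ge0.
  apply: measurable_fun_fubini_tonelli_F; first exact: measurable_funeneg.
  exact: funeneg_ge0.
by apply/funext => x /=; rewrite E.
Qed.

Local Close Scope ereal_scope.
Lemma measurable_nth n i : measurable_fun setT (fun x : n.-tuple R => nth 0 x i).
Proof.
have [lt|ge] := ltnP i n.
  rewrite (_ : (fun x => _) = (@tnth n R ^~ (Ordinal lt))); first exact: measurable_tnth.
  by apply/funext => x; rewrite (tnth_nth 0).
rewrite (_ : (fun x => _) = cst 0) //.
by apply/funext => x; rewrite nth_default // size_tuple.
Qed.

Lemma measurable_sqn n : measurable_fun setT (sqn R n).
Proof.
rewrite /sqn; apply: measurable_sum => i.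
by apply: measurable_funX; exact: measurable_tnth.
Qed.

Lemma unit_ball_measurable m : measurable (unit_ball R m).
Proof.
have -> : unit_ball R m = sqn R m @^-1` `]-oo, 1[.
  by apply/seteqP; split => x /=; rewrite in_itv.
rewrite -[X in measurable X]setTI; exact: measurable_sqn.
Qed.

Lemma measurable_phase m :
  measurable_fun setT (fun z : m.+1.-tuple R * m.-tuple R => phase R m z.1 z.2).
Proof.
apply: measurable_funD.
  apply: measurable_sum => i; apply: measurable_funM.
    exact: measurableT_comp (measurable_nth _ _) measurable_fst.
  exact: measurableT_comp (measurable_tnth _) measurable_snd.
apply: measurable_funM.
  exact: measurableT_comp (measurable_nth _ _) measurable_fst.
exact: measurableT_comp (measurable_sqn _) measurable_snd.
Qed.

Lemma measurable_cosR : measurable_fun setT (@cos R).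
Proof. apply: continuous_measurable_fun; exact: continuous_cos. Qed.
Lemma measurable_sinR : measurable_fun setT (@sin R).
Proof. apply: continuous_measurable_fun; exact: continuous_sin. Qed.

Section ext.
Variables (m : nat) (mu : {sigma_finite_measure set (m.-tuple R) -> \bar R}).
Hypothesis Hmu : lebn R m = mu.
Variables (gr gi : m.-tuple R -> R).
Hypothesis mgr : measurable_fun (unit_ball R m) gr.
Hypothesis mgi : measurable_fun (unit_ball R m) gi.

Let D := unit_ball R m.
Let mD : measurable D := unit_ball_measurable m.
Let grD : m.-tuple R -> R := patch (fun=> 0) D gr.
Let giD : m.-tuple R -> R := patch (fun=> 0) D gi.
Let mgrD : measurable_fun setT grD. Proof. exact: (measurable_restrictT gr mD).1 mgr. Qed.
Let mgiD : measurable_fun setT giD. Proof. exact: (measurable_restrictT gi mD).1 mgi. Qed.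

Lemma measurable_ExtRe : measurable_fun setT (ExtRe R m gr gi).
Proof.
pose h z := cos (phase R m z.1 z.2) * grD z.2 - sin (phase R m z.1 z.2) * giD z.2.
have mh : measurable_fun setT h.
  apply: measurable_funB; apply: measurable_funM.
  - exact: measurableT_comp measurable_cosR (measurable_phase m).
  - exact: measurableT_comp mgrD measurable_snd.
  - exact: measurableT_comp measurable_sinR (measurable_phase m).
  - exact: measurableT_comp mgiD measurable_snd.
rewrite (_ : ExtRe R m gr gi = fun x => fine (\int[mu]_(y in D) (h (x, y))%:E))%E.
  exact: meas_param.
apply/funext => x; rewrite /ExtRe Hmu; congr fine; apply: eq_integral => y yD.
by rewrite /h /grD /giD /patch yD.
Qed.

Lemma measurable_ExtIm : measurable_fun setT (ExtIm R m gr gi).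
Proof.
pose h z := sin (phase R m z.1 z.2) * grD z.2 + cos (phase R m z.1 z.2) * giD z.2.
have mh : measurable_fun setT h.
  apply: measurable_funD; apply: measurable_funM.
  - exact: measurableT_comp measurable_sinR (measurable_phase m).
  - exact: measurableT_comp mgrD measurable_snd.
  - exact: measurableT_comp measurable_cosR (measurable_phase m).
  - exact: measurableT_comp mgiD measurable_snd.
rewrite (_ : ExtIm R m gr gi = fun x => fine (\int[mu]_(y in D) (h (x, y))%:E))%E.
  exact: meas_param.
apply/funext => x; rewrite /ExtIm Hmu; congr fine; apply: eq_integral => y yD.
by rewrite /h /grD /giD /patch yD.
Qed.

Lemma measurable_Ext_abs : measurable_fun setT (Ext_abs R m gr gi).
Proof.
rewrite /Ext_abs; apply: measurableT_comp.
  apply: continuous_measurable_fun; exact: sqrt_continuous.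
apply: measurable_funD; apply: measurable_funX.
  exact: measurable_ExtRe.
exact: measurable_ExtIm.
Qed.
End ext.
Section bound.
Context d (T : measurableType d) (mu : {measure set T -> \bar R}) (D : set T)
  (mD : measurable D) (fr fi : T -> R).
Hypothesis ifr : mu.-integrable D (fun w => (fr w)%:E).
Hypothesis ifi : mu.-integrable D (fun w => (fi w)%:E).

Lemma mfr : measurable_fun D fr.
Proof. exact/measurable_EFinP/(measurable_int _ ifr). Qed.
Lemma mfi : measurable_fun D fi.
Proof. exact/measurable_EFinP/(measurable_int _ ifi). Qed.

Let J := (\int[mu]_(w in D) (`|fr w| + `|fi w|)%:E)%E.

Lemma J_fin : J \is a fin_num.
Proof.
have m1 : measurable_fun D (fun w => (`|fr w|)%:E).
  apply/measurable_EFinP; apply: measurableT_comp => //; exact: mfr.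
have m2 : measurable_fun D (fun w => (`|fi w|)%:E).
  apply/measurable_EFinP; apply: measurableT_comp => //; exact: mfi.
rewrite /J (eq_integral (fun w => (`|fr w|)%:E + (`|fi w|)%:E)%E); last first.
  by move=> w _; rewrite EFinD.
rewrite ge0_integralD //.
have /integrableP[_ h1] := ifr; have /integrableP[_ h2] := ifi.
have e1 : (\int[mu]_(x in D) `|fr x|%:E)%E \is a fin_num.
  rewrite -integral_fin_num_abs //; last by apply: measurableT_comp => //; exact: mfr.
  under eq_integral => x _ do rewrite abse_EFin normr_id.
  by move: h1; under eq_integral => x _ do rewrite abse_EFin.
have e2 : (\int[mu]_(x in D) `|fi x|%:E)%E \is a fin_num.
  rewrite -integral_fin_num_abs //; last by apply: measurableT_comp => //; exact: mfi.
  under eq_integral => x _ do rewrite abse_EFin normr_id.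
  by move: h2; under eq_integral => x _ do rewrite abse_EFin.
by rewrite fin_numD e1 e2.
Qed.

Lemma J_ge0 : (0 <= J)%E.
Proof. by apply: integral_ge0 => w _; rewrite lee_fin addr_ge0. Qed.

Lemma bound_int (phi : T -> R) : measurable_fun D phi ->
  (forall w, D w -> `|phi w| <= `|fr w| + `|fi w|) ->
  `|fine (\int[mu]_(w in D) (phi w)%:E)| <= fine J.
Proof.
move=> mphi hphi.
have le1 : (`|\int[mu]_(w in D) (phi w)%:E| <= J)%E.
  apply: le_trans (le_abse_integral mu mD _) _.
    exact/measurable_EFinP.
  apply: ge0_le_integral => //.
    by apply: measurableT_comp => //; exact/measurable_EFinP.
  apply/measurable_EFinP; apply: measurable_funD; apply: measurableT_comp => //.
    exact: mfr.
  exact: mfi.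
have [fI|nfI] := boolP ((\int[mu]_(w in D) (phi w)%:E)%E \is a fin_num).
  rewrite -(fine_abse fI); apply: fine_le => //; last exact: J_fin.
  by rewrite abse_fin_num.
move: nfI; set I := (\int[mu]_(w in D) _)%E; case: I => [r|_|_] //=;
  by rewrite normr0 fine_ge0 // J_ge0.
Qed.
End bound.

Lemma sqrt_le_abs (a b : R) : Num.sqrt (a ^+ 2 + b ^+ 2) <= `|a| + `|b|.
Proof.
rewrite -[X in _ <= X]ger0_norm ?addr_ge0 // -sqrtr_sqr ler_sqrt ?sqr_ge0 //.
have ha := normr_ge0 a; have hb := normr_ge0 b.
rewrite -[a ^+ 2]real_normK ?num_real // -[b ^+ 2]real_normK ?num_real //; nra.
Qed.

Lemma eball_measurable n (c : n.-tuple R) (r : R) : measurable (eball R n c r).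
Proof.
have -> : eball R n c r =
    (fun x : n.-tuple R => \sum_(i < n) (tnth x i - tnth c i) ^+ 2) @^-1` `]-oo, r ^+ 2[.
  by apply/seteqP; split => x /=; rewrite in_itv.
rewrite -[X in measurable X]setTI; apply: measurable_sum => // i.
apply: measurable_funX; apply: measurable_funB => //; exact: measurable_tnth.
Qed.

Lemma eball_cube n (c : n.-tuple R) (r : R) :
  eball R n c r `<=` cube n (\sum_(i < n) `|tnth c i| + `|r|).
Proof.
move=> x /= hx i.
have h1 : (tnth x i - tnth c i) ^+ 2 <= r ^+ 2.
  apply: ltW; apply: le_lt_trans hx; rewrite (bigD1 i) //= ler_wpDr //.
  by apply: sumr_ge0 => j _; exact: sqr_ge0.
have h2 : `|tnth x i - tnth c i| <= `|r|.
  by rewrite -ler_sqr ?nnegrE // !real_normK ?num_real.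
have h3 : `|tnth c i| <= \sum_(j < n) `|tnth c j|.
  rewrite (bigD1 i) //= ler_wpDr //; by apply: sumr_ge0.
have := ler_distD (tnth c i) (tnth x i) 0; rewrite !subr0 => h4.
apply: le_trans h4 _; rewrite addrC lerD //.
Qed.
End P2.

Section P4.
Lemma interp d (T : measurableType d) (nu : {measure set T -> \bar R}) (F : T -> R)
  (mF : measurable_fun setT F) (F0 : forall x, (0 <= F x)%R) (p p1 p2 t1 t2 : R) :
  (0 < p1)%R -> (0 < p2)%R -> (0 < t1)%R -> (0 < t2)%R -> (t1 + t2 = 1)%R ->
  p = (t1 * p1 + t2 * p2)%R ->
  (\int[nu]_x (F x `^ p)%:E <=
    (\int[nu]_x (F x `^ p1)%:E) `^ t1 * (\int[nu]_x (F x `^ p2)%:E) `^ t2)%E.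
Proof.
move=> p10 p20 t10 t20 t12 pE.
have p0 : (0 < p)%R by rewrite pE addr_gt0 // mulr_gt0.
have mP (q : R) : measurable_fun setT (fun x => F x `^ q).
  exact: measurableT_comp (measurable_powR q) mF.
have := @hoelder _ _ R nu (fun x => F x `^ (t1 * p1)) (fun x => F x `^ (t2 * p2))
  t1^-1 t2^-1 (mP _) (mP _) (ltac:(by rewrite invr_gt0)) (ltac:(by rewrite invr_gt0)).
rewrite !invrK => /(_ t12).
rewrite Lnorm1 !unlock /Lnorm.
have -> : (\int[nu]_x `|(EFin \o (fun x => (F x `^ (t1 * p1) * F x `^ (t2 * p2))%R)) x| =
    \int[nu]_x (F x `^ p)%R%:E)%E.
  apply: eq_integral => x _ /=; rewrite -powRD; last first.
    by rewrite -pE gt_eqF.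
  by rewrite -pE ger0_norm // powR_ge0.
rewrite !invrK.
have E (t q : R) : (0 < t)%R ->
    (\int[nu]_x `|(EFin \o (fun x => (F x `^ (t * q))%R)) x| `^ t^-1 =
    \int[nu]_x (F x `^ q)%R%:E)%E.
  move=> t0; apply: eq_integral => x _ /=.
  rewrite ger0_norm ?powR_ge0 // -powRrM.
  by rewrite mulrAC mulfV ?gt_eqF // mul1r.
by rewrite (E t1 p1 t10) (E t2 p2 t20).
Qed.
End P4.

Section loc.
Variables (m : nat) (mu : {sigma_finite_measure set (m.-tuple R) -> \bar R}).
Hypothesis Hmu : lebn R m = mu.
Variables (nu : {sigma_finite_measure set (m.+1.-tuple R) -> \bar R}).
Hypothesis Hnu : lebn R m.+1 = nu.
Hypothesis Hcube : forall a, (nu (cube m.+1 a) < +oo)%E.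
Variables (fr fi : m.-tuple R -> R).
Hypothesis ifr : (lebn R m).-integrable (unit_ball R m) (fun w => (fr w)%:E).
Hypothesis ifi : (lebn R m).-integrable (unit_ball R m) (fun w => (fi w)%:E).
Variables (tau : set (m.-tuple R)) (mtau : measurable tau).

Let D := unit_ball R m.
Let mD : measurable D := unit_ball_measurable m.
Let ifr' : mu.-integrable D (fun w => (fr w)%:E). Proof. by rewrite -Hmu. Qed.
Let ifi' : mu.-integrable D (fun w => (fi w)%:E). Proof. by rewrite -Hmu. Qed.
Let gr := restr R m tau fr.
Let gi := restr R m tau fi.

Let mg (f : m.-tuple R -> R) : measurable_fun D f -> measurable_fun D (restr R m tau f).
Proof. by move=> mf; apply: measurable_funM => //; exact: measurable_indic. Qed.

Let mgr : measurable_fun D gr.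
Proof. rewrite /gr /gi; apply: mg.
apply/measurable_EFinP. exact: (measurable_int _ ifr'). Qed.
Let mgi : measurable_fun D gi.
Proof. rewrite /gr /gi; apply: mg.
apply/measurable_EFinP. exact: (measurable_int _ ifi'). Qed.

Let restr_le (f : m.-tuple R -> R) w : `|restr R m tau f w| <= `|f w|.
Proof.
rewrite /restr normrM indicE; case: (w \in tau); rewrite ?normr1 ?mulr1 //.
by rewrite normr0 mulr0.
Qed.

Let tl (a : R) f w : `|a| <= 1 -> `|a * restr R m tau f w| <= `|f w|.
Proof.
move=> ha; rewrite normrM -[X in _ <= X]mul1r.
by apply: ler_pM => //; exact: restr_le.
Qed.

Let Jf := fine (\int[mu]_(w in D) (`|fr w| + `|fi w|)%:E)%E.

Let mph (x : m.+1.-tuple R) : measurable_fun D (fun w => phase R m x w).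
Proof.
apply: (measurable_funS measurableT) => //.
rewrite (_ : (fun w => phase R m x w) =
  (fun z : m.+1.-tuple R * m.-tuple R => phase R m z.1 z.2) \o (fun w => (x, w))) //.
apply: measurableT_comp; first exact: measurable_phase.
exact: measurable_fun_pair.
Qed.

Lemma G_le x : Ext_abs R m gr gi x <= 2 * Jf.
Proof.
apply: le_trans (sqrt_le_abs _ _) _; rewrite mulr2n mulrDl mul1r lerD //.
- rewrite /ExtRe Hmu; apply: bound_int => //.
    apply: measurable_funB; apply: measurable_funM => //.
      exact: measurableT_comp measurable_cosR (mph x).
    exact: measurableT_comp measurable_sinR (mph x).
  move=> w _; apply: le_trans (ler_normB _ _) _.
  by rewrite lerD // tl // ?cos_max ?sin_max.
- rewrite /ExtIm Hmu; apply: bound_int => //.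
    apply: measurable_funD; apply: measurable_funM => //.
      exact: measurableT_comp measurable_sinR (mph x).
    exact: measurableT_comp measurable_cosR (mph x).
  move=> w _; apply: le_trans (ler_normD _ _) _.
  by rewrite lerD // tl // ?cos_max ?sin_max.
Qed.
End loc.


Section loc2.
Variables (m : nat) (mu : {sigma_finite_measure set (m.-tuple R) -> \bar R}).
Hypothesis Hmu : lebn R m = mu.
Variables (nu : {sigma_finite_measure set (m.+1.-tuple R) -> \bar R}).
Hypothesis Hcube : forall a, (nu (cube m.+1 a) < +oo)%E.
Variables (fr fi : m.-tuple R -> R).
Hypothesis ifr : (lebn R m).-integrable (unit_ball R m) (fun w => (fr w)%:E).
Hypothesis ifi : (lebn R m).-integrable (unit_ball R m) (fun w => (fi w)%:E).
Variables (tau : set (m.-tuple R)) (mtau : measurable tau).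

Let D := unit_ball R m.
Let mD : measurable D := unit_ball_measurable m.
Let ifr' : mu.-integrable D (fun w => (fr w)%:E). Proof. by rewrite -Hmu. Qed.
Let ifi' : mu.-integrable D (fun w => (fi w)%:E). Proof. by rewrite -Hmu. Qed.
Let gr := restr R m tau fr.
Let gi := restr R m tau fi.
Let mg (f : m.-tuple R -> R) : measurable_fun D f -> measurable_fun D (restr R m tau f).
Proof. by move=> mf; apply: measurable_funM => //; exact: measurable_indic. Qed.
Let mgr : measurable_fun D gr.
Proof. rewrite /gr; apply: mg; apply/measurable_EFinP; exact: (measurable_int _ ifr'). Qed.
Let mgi : measurable_fun D gi.
Proof. rewrite /gi; apply: mg; apply/measurable_EFinP; exact: (measurable_int _ ifi'). Qed.

Let G := Ext_abs R m gr gi.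
Let mG : measurable_fun setT G := measurable_Ext_abs m mu Hmu gr gi mgr mgi.
Let G0 x : 0 <= G x. Proof. exact: sqrtr_ge0. Qed.
Let K0 := 2 * fine (\int[mu]_(w in unit_ball R m) (`|fr w| + `|fi w|)%:E)%E.
Let GK x : G x <= K0. Proof. exact: G_le. Qed.
Let K00 : 0 <= K0. Proof. exact: le_trans (G0 (nseq_tuple m.+1 0)) (GK _). Qed.

Let mGq q : measurable_fun setT (fun x => G x `^ q).
Proof. exact: measurableT_comp (measurable_powR q) mG. Qed.

Lemma int_fin (c : m.+1.-tuple R) (r q : R) : 0 <= q ->
  (\int[nu]_(x in eball R m.+1 c r) (G x `^ q)%:E)%E \is a fin_num.
Proof.
move=> q0; set B := eball R m.+1 c r.
have mB : measurable B := eball_measurable m.+1 c r.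
rewrite ge0_fin_numE; last by apply: integral_ge0 => x _; rewrite lee_fin powR_ge0.
apply: (@le_lt_trans _ _ (\int[nu]_(x in B) (cst (K0 `^ q)%:E) x)%E).
  apply: ge0_le_integral => //.
  - by move=> x _; rewrite lee_fin powR_ge0.
  - apply/measurable_EFinP; exact: (measurable_funS measurableT).
  - by move=> x _; rewrite lee_fin ge0_ler_powR // ?nnegrE.
rewrite integral_cst //; apply: lte_mul_pinfty => //; first by rewrite lee_fin powR_ge0.
apply: le_lt_trans (Hcube (\sum_(i < m.+1) `|tnth c i| + `|r|)).
apply: le_measure; rewrite ?inE //; first exact: cube_measurable.
exact: (eball_cube m.+1 c r).
Qed.

Lemma loc_interp (c : m.+1.-tuple R) (r p p1 p2 t1 t2 : R) :
  0 < p1 -> 0 < p2 -> 0 < t1 -> 0 < t2 -> t1 + t2 = 1 -> p = t1 * p1 + t2 * p2 ->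
  fine (\int[nu]_(x in eball R m.+1 c r) (G x `^ p)%:E)%E <=
  fine (\int[nu]_(x in eball R m.+1 c r) (G x `^ p1)%:E)%E `^ t1 *
  fine (\int[nu]_(x in eball R m.+1 c r) (G x `^ p2)%:E)%E `^ t2.
Proof.
move=> p10 p20 t10 t20 t12 pE.
have p0 : 0 < p by rewrite pE addr_gt0 // mulr_gt0.
set B := eball R m.+1 c r.
have mB : measurable B := eball_measurable m.+1 c r.
pose F := patch (fun=> 0) B G.
have mF : measurable_fun setT F.
  exact: (measurable_restrictT G mB).1 (measurable_funS measurableT _ mG).
have F0 x : 0 <= F x by rewrite /F /patch; case: ifP.
have EF q : 0 < q ->
    (\int[nu]_(x in B) (G x `^ q)%:E = \int[nu]_x (F x `^ q)%:E)%E.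
  move=> q0; rewrite integral_mkcond; apply: eq_integral => x _.
  by rewrite /F /patch; case: ifP => _ //; rewrite powR0 // gt_eqF.
have := interp _ _ nu F mF F0 p p1 p2 t1 t2 p10 p20 t10 t20 t12 pE.
rewrite -!EF //.
have fa := int_fin c r p (ltW p0).
have fb := int_fin c r p1 (ltW p10).
have fc := int_fin c r p2 (ltW p20).
move: fa fb fc.
set a := (\int[nu]_(x in B) _)%E.
set b := (\int[nu]_(x in B) _)%E.
set e := (\int[nu]_(x in B) _)%E.
move=> fa fb fc.
by rewrite -[a]fineK // -[b]fineK // -[e]fineK // !poweR_EFin -EFinM lee_fin.
Qed.

Lemma loc_ge0 (B : set (m.+1.-tuple R)) q :
  0 <= fine (\int[nu]_(x in B) (G x `^ q)%:E)%E.
Proof. by apply: fine_ge0; apply: integral_ge0 => x _; rewrite lee_fin powR_ge0. Qed.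

End loc2.

Section comb.
Variables (I : finType) (V : Type) (dimok : V -> Prop) (ok : V -> I -> Prop).

Definition Yset (A : nat) (L : I -> R) : set R :=
  [set y | exists Vs : 'I_A -> V, (forall a, dimok (Vs a)) /\
     y = \big[Num.max/0]_(i : I | `[< forall a, ok (Vs a) i >]) L i].

Lemma bigmax0_ge0 (P : pred I) (L : I -> R) : (forall i, 0 <= L i) ->
  0 <= \big[Num.max/0]_(i | P i) L i.
Proof.
move=> L0; elim/big_ind: _ => // a b ha hb.
by rewrite le_max ha.
Qed.

Lemma Y_ge0 A L : (forall i, 0 <= L i) -> forall y, Yset A L y -> 0 <= y.
Proof. by move=> L0 y [Vs [_ ->]]; exact: bigmax0_ge0. Qed.

Variables (v0 : V) (dv0 : dimok v0).

Lemma Y_min A L : exists y0, Yset A L y0 /\ inf (Yset A L) = y0.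
Proof.
pose f (S : {set I}) := \big[Num.max/0]_(i in S) L i.
pose P S := `[< Yset A L (f S) >].
have fE (Vs : 'I_A -> V) : \big[Num.max/0]_(i : I | `[< forall a, ok (Vs a) i >]) L i =
    f [set i | `[< forall a, ok (Vs a) i >]]%SET.
  by apply: eq_bigl => i; rewrite inE.
pose S0 := [set i | `[< forall a : 'I_A, ok v0 i >]]%SET.
have PS0 : P S0.
  apply/asboolP; exists (fun=> v0); split => //; exact: fE.
case: (@Order.TotalTheory.arg_minP _ R _ S0 P f PS0) => S /asboolP YS Hmin.
have lb : lbound (Yset A L) (f S).
  move=> y [Vs [dVs ->]]; rewrite fE; apply: Hmin; apply/asboolP.
  by exists Vs; split => //; rewrite fE.
exists (f S); split => //.
apply/le_anti/andP; split.
  by apply: (ge_inf _); [exists (f S)|].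
by apply: lb_le_inf => //; exists (f S).
Qed.

Lemma comb A1 A2 L L1 L2 t1 t2 :
  (forall i, 0 <= L1 i) -> (forall i, 0 <= L2 i) -> (forall i, 0 <= L i) ->
  0 <= t1 -> 0 <= t2 ->
  (forall i, L i <= L1 i `^ t1 * L2 i `^ t2) ->
  inf (Yset (A1 + A2) L) <= inf (Yset A1 L1) `^ t1 * inf (Yset A2 L2) `^ t2.
Proof.
move=> L10 L20 L0 t10 t20 H.
have [y1 [[Vs1 [d1 y1E]] ->]] := Y_min A1 L1.
have [y2 [[Vs2 [d2 y2E]] ->]] := Y_min A2 L2.
pose Vs (a : 'I_(A1 + A2)) := match fintype.split a with inl a1 => Vs1 a1 | inr a2 => Vs2 a2 end.
have dVs a : dimok (Vs a) by rewrite /Vs; case: fintype.split.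
set y := \big[Num.max/0]_(i : I | `[< forall a, ok (Vs a) i >]) L i.
have Yy : Yset (A1 + A2) L y by exists Vs.
apply: (@le_trans _ _ y).
  by apply: (ge_inf _) => //; exists 0 => z; exact: Y_ge0.
apply: bigmax_le; first by rewrite mulr_ge0 // powR_ge0.
move=> i /asboolP hi; apply: le_trans (H i) _.
have h1 : `[< forall a, ok (Vs1 a) i >].
  apply/asboolP => a1; have := hi (lshift A2 a1).
  by rewrite /Vs (unsplitK (inl a1)).
have h2 : `[< forall a, ok (Vs2 a) i >].
  apply/asboolP => a2; have := hi (rshift A1 a2).
  by rewrite /Vs (unsplitK (inr a2)).
apply: ler_pM; rewrite ?powR_ge0 //.
  apply: ge0_ler_powR => //; rewrite ?nnegrE //; first by rewrite y1E bigmax0_ge0.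
  by rewrite y1E; exact: (le_bigmax_cond _ _ h1).
apply: ge0_ler_powR => //; rewrite ?nnegrE //; first by rewrite y2E bigmax0_ge0.
by rewrite y2E; exact: (le_bigmax_cond _ _ h2).
Qed.
End comb.

Lemma dhold (J : finType) (S : {set J}) (a b : J -> R) (t1 t2 : R) :
  (forall j, 0 <= a j) -> (forall j, 0 <= b j) -> 0 <= t1 -> 0 <= t2 -> t1 + t2 = 1 ->
  \sum_(j in S) a j `^ t1 * b j `^ t2 <=
  (\sum_(j in S) a j) `^ t1 * (\sum_(j in S) b j) `^ t2.
Proof.
move=> a0 b0 t10 t20 t12.
have [t1z|t1n0] := eqVneq t1 0.
  subst t1; rewrite add0r in t12; subst t2.
  under eq_bigr => j _ do rewrite powRr0 powRr1 // mul1r.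
  by rewrite powRr0 powRr1 ?mul1r // sumr_ge0.
have [t2z|t2n0] := eqVneq t2 0.
  subst t2; rewrite addr0 in t12; subst t1.
  under eq_bigr => j _ do rewrite powRr0 powRr1 // mulr1.
  by rewrite powRr0 powRr1 ?mulr1 // sumr_ge0.
have t1p : 0 < t1 by rewrite lt0r t1n0.
have t2p : 0 < t2 by rewrite lt0r t2n0.
set SA := \sum_(j in S) a j; set SB := \sum_(j in S) b j.
have SA0 : 0 <= SA by rewrite sumr_ge0.
have SB0 : 0 <= SB by rewrite sumr_ge0.
have [SAz|SAn0] := eqVneq SA 0.
  have az := psumr_eq0P (fun j _ => a0 j) SAz.
  rewrite big1 ?mulr_ge0 ?powR_ge0 // => j jS.
  by rewrite az // powR0 // mul0r.
have [SBz|SBn0] := eqVneq SB 0.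
  have bz := psumr_eq0P (fun j _ => b0 j) SBz.
  rewrite big1 ?mulr_ge0 ?powR_ge0 // => j jS.
  by rewrite bz // powR0 // mulr0.
set C := SA `^ t1 * SB `^ t2.
have C0 : 0 <= C by rewrite mulr_ge0 ?powR_ge0.
have key j : a j `^ t1 * b j `^ t2 <= C * (t1 * (a j / SA) + t2 * (b j / SB)).
  have ha : a j = a j / SA * SA by rewrite divfK.
  have hb : b j = b j / SB * SB by rewrite divfK.
  have aS0 : 0 <= a j / SA by rewrite divr_ge0.
  have bS0 : 0 <= b j / SB by rewrite divr_ge0.
  rewrite [in X in X <= _]ha [in X in X <= _]hb (powRM _ aS0 SA0) (powRM _ bS0 SB0).
  rewrite mulrACA [X in X <= _]mulrC.
  rewrite ler_wpM2l //.
  have := @conjugate_powR R ((a j / SA) `^ t1) ((b j / SB) `^ t2) t1^-1 t2^-1.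
  rewrite !powR_ge0 !invr_gt0 t1p t2p !invrK => /(_ isT isT isT isT t12).
  rewrite -!powRrM !mulfV ?gt_eqF // !powRr1 //.
  by rewrite [t1 * _]mulrC [t2 * _]mulrC.
apply: le_trans (ler_sum _ (fun j _ => key j)) _.
rewrite -mulr_sumr big_split /= -!mulr_sumr -!mulr_suml -/SA -/SB !mulfV //.
by rewrite !mulr1 t12 mulr1.
Qed.

Lemma ex_dim (m k : nat) : (k <= m.+1)%N -> exists V : {vspace 'rV[R]_(m.+1)}, \dim V = k.
Proof.
move=> hk.
pose X : seq 'rV[R]_(m.+1) := vbasis fullv.
have fX : free X := basis_free (vbasisP fullv).
have sX : size X = m.+1 by rewrite size_tuple dimvf /dim /= mul1n.
exists <<take k X>>%VS.
have fT : free (take k X).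
  by apply: (@catl_free _ _ (drop k X)); rewrite cat_take_drop.
move/eqP: fT => ->; rewrite size_take sX.
by move: hk; rewrite leq_eqVlt => /orP[/eqP ->|->]; rewrite ?ltnn.
Qed.
End Main.

Theorem lemma4p2 (R : realType) (m : nat) (K Rr : R) (k : nat)
  (I : finType) (tau : I -> set (m.-tuple R))
  (J : finType) (c : J -> m.+1.-tuple R) (S : {set J})
  (fr fi : m.-tuple R -> R)
  (p p1 p2 alpha1 alpha2 : R) (A A1 A2 : nat) :
  0 < K -> 0 < Rr -> (1 <= k <= m.+1)%N ->
  (forall i, measurable (tau i)) ->
  (forall i j, i != j -> tau i `&` tau j = set0) ->
  \bigcup_(i in [set: I]) tau i = unit_ball R m ->
  (forall x, eucl R m.+1 x < Rr -> exists j, eball R m.+1 (c j) (K ^+ 2) x) ->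
  (lebn R m).-integrable (unit_ball R m) (fun w => (fr w)%:E) ->
  (lebn R m).-integrable (unit_ball R m) (fun w => (fi w)%:E) ->
  1 <= p -> 1 <= p1 -> 1 <= p2 ->
  0 <= alpha1 <= 1 -> 0 <= alpha2 <= 1 -> alpha1 + alpha2 = 1 ->
  p^-1 = alpha1 / p1 + alpha2 / p2 ->
  A = (A1 + A2)%N ->
  BLnorm R m I tau K k A fr fi J c S p <=
    (BLnorm R m I tau K k A1 fr fi J c S p1) `^ alpha1 *
    (BLnorm R m I tau K k A2 fr fi J c S p2) `^ alpha2.
Proof.
move=> K0 Rr0 hk mtau disj cover hball ifr ifi hp hp1 hp2
  /andP[a10 a11] /andP[a20 a21] a12 hpinv hA.
have [mu [Hmu _]] := @lebn_ex R m.
have [nu [Hnu Hcube]] := @lebn_ex R m.+1.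
have p0 : 0 < p by apply: lt_le_trans hp.
have p10 : 0 < p1 by apply: lt_le_trans hp1.
have p20 : 0 < p2 by apply: lt_le_trans hp2.
pose t1 := alpha1 * p / p1.
pose t2 := alpha2 * p / p2.
have t10 : 0 <= t1 by rewrite /t1 divr_ge0 ?mulr_ge0 // ltW.
have t20 : 0 <= t2 by rewrite /t2 divr_ge0 ?mulr_ge0 // ltW.
have t12 : t1 + t2 = 1.
  rewrite /t1 /t2 [alpha1 * p]mulrC [alpha2 * p]mulrC -!mulrA -mulrDr -hpinv.
  by rewrite mulfV // gt_eqF.
have pE : p = t1 * p1 + t2 * p2.
  rewrite /t1 /t2 !divfK ?gt_eqF // -mulrDl a12 mul1r //.
pose L q i j := loc_int R m fr fi (tau i) (eball R m.+1 (c j) (K ^+ 2)) q.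
have L0 q i j : 0 <= L q i j.
  rewrite /L /loc_int Hnu; exact: (@loc_ge0 R m nu fr fi (tau i)).
have Lloc i j : L p i j <= L p1 i j `^ t1 * L p2 i j `^ t2.
  have [t1z|t1n0] := eqVneq t1 0.
    have t2o : t2 = 1 by rewrite -t12 t1z add0r.
    have pp2 : p = p2 by rewrite pE t1z t2o mul0r add0r mul1r.
    by rewrite t1z t2o powRr0 powRr1 // mul1r pp2.
  have [t2z|t2n0] := eqVneq t2 0.
    have t1o : t1 = 1 by rewrite -t12 t2z addr0.
    have pp1 : p = p1 by rewrite pE t2z t1o mul0r addr0 mul1r.
    by rewrite t2z t1o powRr0 powRr1 // mulr1 pp1.
  rewrite /L /loc_int Hnu.
  apply: (@loc_interp R m mu Hmu nu Hcube fr fi ifr ifi (tau i)) => //.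
    by rewrite lt0r t1n0.
  by rewrite lt0r t2n0.
pose dimok (V : {vspace 'rV[R]_(m.+1)}) := \dim V = k.-1.
pose ok (V : {vspace 'rV[R]_(m.+1)}) (i : I) := angle_gt R m.+1 (Gmap R m @` tau i) V K^-1.
have [v0 dv0] : exists v0 : {vspace 'rV[R]_(m.+1)}, dimok v0.
  apply: (@ex_dim R); case/andP: hk => _ hk'; exact: leq_trans (leq_pred k) hk'.
pose M q A' j := mu_p R m I tau K k A' fr fi (eball R m.+1 (c j) (K ^+ 2)) q.
have ME q A' j : M q A' j = inf (@Yset R I _ dimok ok A' (fun i => L q i j)) by [].
have M0 q A' j : 0 <= M q A' j.
  rewrite ME; have [y0 [Yy0 ->]] := @Y_min R I _ dimok ok v0 dv0 A' (fun i => L q i j).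
  exact: (@Y_ge0 R I _ dimok ok A' _ (fun i => L0 q i j) y0 Yy0).
have hM j : M p A j <= M p1 A1 j `^ t1 * M p2 A2 j `^ t2.
  rewrite !ME hA; apply: (@comb R I _ dimok ok v0 dv0) => //;
    move=> i; first [exact: Lloc | exact: L0].
have BE q A' : BLnorm R m I tau K k A' fr fi J c S q = (\sum_(j in S) M q A' j) `^ q^-1 by [].
rewrite !BE.
have S1 : \sum_(j in S) M p A j <=
    (\sum_(j in S) M p1 A1 j) `^ t1 * (\sum_(j in S) M p2 A2 j) `^ t2.
  apply: le_trans (ler_sum _ (fun j _ => hM j)) _; exact: (@dhold R).
set X := \sum_(j in S) M p A j.
set Y1 := \sum_(j in S) M p1 A1 j.
set Y2 := \sum_(j in S) M p2 A2 j.
have X0 : 0 <= X by rewrite sumr_ge0.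
have Y10 : 0 <= Y1 by rewrite sumr_ge0.
have Y20 : 0 <= Y2 by rewrite sumr_ge0.
apply: le_trans (ge0_ler_powR _ _ _ S1) _.
- by rewrite invr_ge0 ltW.
- by rewrite nnegrE.
- by rewrite nnegrE mulr_ge0 // powR_ge0.
rewrite powRM ?powR_ge0 // -!powRrM.
have e1 : t1 * p^-1 = p1^-1 * alpha1.
  by rewrite /t1; field; apply/andP; split; rewrite gt_eqF.
have e2 : t2 * p^-1 = p2^-1 * alpha2.
  by rewrite /t2; field; apply/andP; split; rewrite gt_eqF.
by rewrite e1 e2.
Qed.
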